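(* Let $(q_n),(r_n)$ be complex sequences vanishing faster than any negative power of $|n|$ as $n\to\pm\infty$ with $1-q_nr_n\neq0$ and $1+q_nr_{n+1}\neq0$ for all $n\in\mathbb Z$. Set $D_n=\prod_{j=-\infty}^n(1-q_jr_j)$, $E_n=\prod_{j=-\infty}^n(1+q_jr_{j+1})$, $D_\infty=\prod_{j\in\mathbb Z}(1-q_jr_j)$, $E_\infty=\prod_{j\in\mathbb Z}(1+q_jr_{j+1})$, and define $$u_n=q_n\frac{E_{n-1}}{D_n},\quad v_n=(-r_n+r_{n+1}-q_nr_nr_{n+1})\frac{D_{n-1}}{E_n},\quad p_n=(q_n-q_{n+1}-q_nq_{n+1}r_{n+1})\frac{E_{n-1}}{D_{n+1}},\quad s_n=r_{n+1}\frac{D_n}{E_n}.$$ Then $$1-u_nv_n=\frac1{(1-q_nr_n)(1+q_nr_{n+1})},\qquad 1-p_ns_n=\frac1{(1-q_{n+1}r_{n+1})(1+q_nr_{n+1})},$$ and, with $D_n^{(u,v)}=\prod_{j\le n}(1-u_jv_j)$, $D_\infty^{(u,v)}=\prod_{j\in\mathbb Z}(1-u_jv_j)$, $D_n^{(p,s)}=\prod_{j\le n}(1-p_js_j)$, $D_\infty^{(p,s)}=\prod_{j\in\mathbb Z}(1-p_js_j)$, $$D_n^{(u,v)}=\frac1{D_nE_n},\quad D_\infty^{(u,v)}=\frac1{D_\infty E_\infty},\quad D_n^{(p,s)}=\frac1{D_{n+1}E_n},\quad D_\infty^{(p,s)}=\frac1{D_\infty E_\infty}.$$ *)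

(* Defs.v *)
From HB Require Import structures.
From mathcomp Require Import all_boot all_order all_algebra.
From mathcomp Require Import complex.
From mathcomp Require Import all_classical all_reals all_analysis.
Set Implicit Arguments. Unset Strict Implicit. Unset Printing Implicit Defensive.
Import Order.TTheory GRing.Theory Num.Theory.
Import numFieldNormedType.Exports.
Local Open Scope ring_scope.
Local Open Scope classical_set_scope.
Local Open Scope ring_scope.

Definition rapid_decay (R : realType) (f : int -> R[i]) : Prop :=
  forall k : nat, forall eps : R, 0 < eps ->
    exists N : nat, forall n : int, (N <= `|n|)%N ->
      ((`|n|%:R : R[i]) ^+ k * `|f n| <= (eps%:C)%C).

(* Convergence is in the standard (norm) topology of C = R[i]; the alias ^o
   only serves to pick up the normed-field topology instance. *)

Definition lprod_to (R : realType) (f : int -> R[i]) (n : int) (L : R[i]) : Prop :=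
  (fun m : nat => (\prod_(i < m) f (n - i%:Z) : (R[i])^o)) @ \oo --> (L : (R[i])^o).

Definition zprod_to (R : realType) (f : int -> R[i]) (L : R[i]) : Prop :=
  (fun m : nat => (\prod_(i < (2 * m).+1) f (i%:Z - m%:Z) : (R[i])^o)) @ \oo
    --> (L : (R[i])^o).

Definition useq (R : realType) (q r D E : int -> R[i]) (n : int) : R[i] :=
  q n * E (n - 1) / D n.
Definition vseq (R : realType) (q r D E : int -> R[i]) (n : int) : R[i] :=
  (- r n + r (n + 1) - q n * r n * r (n + 1)) * D (n - 1) / E n.
Definition pseq (R : realType) (q r D E : int -> R[i]) (n : int) : R[i] :=
  (q n - q (n + 1) - q n * q (n + 1) * r (n + 1)) * E (n - 1) / D (n + 1).
Definition sseq (R : realType) (q r D E : int -> R[i]) (n : int) : R[i] :=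
  r (n + 1) * D n / E n.

(* Main.v *)
Require Import Defs.
From HB Require Import structures.
From mathcomp Require Import all_boot all_order all_algebra.
From mathcomp Require Import complex.
From mathcomp Require Import all_classical all_reals all_analysis.
Import Order.TTheory GRing.Theory Num.Theory.
Import numFieldNormedType.Exports.
Local Open Scope ring_scope.
Local Open Scope classical_set_scope.
Local Open Scope ring_scope.

From mathcomp Require Import zify ring lra.
Set Implicit Arguments. Unset Strict Implicit. Unset Printing Implicit Defensive.

Section Nrm.
Variable R : realType.
Local Notation C := (R[i]).
Definition nrm (z : C) : R := complex.Re `|z|.
Lemma normE (z : C) : `|z| = (nrm z)%:C%C.
Proof. by rewrite /nrm normc_def. Qed.
Lemma nrm_ge0 z : 0 <= nrm z.
Proof. by have := normr_ge0 z; rewrite normE lecR. Qed.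
Lemma nrmD x y : nrm (x + y) <= nrm x + nrm y.
Proof. by have := ler_normD x y; rewrite !normE -rmorphD lecR. Qed.
Lemma nrmM x y : nrm (x * y) = nrm x * nrm y.
Proof. by apply: complexI; rewrite rmorphM -!normE normrM. Qed.
Lemma nrmN x : nrm (- x) = nrm x.
Proof. by apply: complexI; rewrite -!normE normrN. Qed.
Lemma nrm1 : nrm 1 = 1.
Proof. by apply: complexI; rewrite -!normE normr1. Qed.
Lemma nrm_eq0 x : (nrm x == 0) = (x == 0).
Proof. by have := normr_eq0 x; rewrite normE => <-; rewrite eq_complex /= eqxx andbT. Qed.
Lemma nrm_gt0 x : (0 < nrm x) = (x != 0).
Proof. by rewrite lt_def nrm_eq0 nrm_ge0 andbT. Qed.
Lemma nrmB x y : nrm (x - y) = nrm (y - x).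
Proof. by rewrite -nrmN opprB. Qed.
Lemma nrmC (a : R) : nrm (a%:C)%C = `|a|.
Proof. by rewrite /nrm normc_def /= expr0n /= addr0 sqrtr_sqr. Qed.
Lemma Re_le (z : C) : `|complex.Re z| <= nrm z.
Proof. by have := normc_ge_Re z; rewrite normE lecR. Qed.
Lemma nrmi : nrm 'i%C = 1.
Proof. by rewrite /nrm normc_def /= expr0n /= add0r expr1n sqrtr1. Qed.
Lemma Im_le (z : C) : `|complex.Im z| <= nrm z.
Proof.
have := Re_le (z * 'i%C); rewrite ReiNIm normrN nrmM nrmi mulr1 //.
Qed.
Lemma nrm_ReIm (z : C) : nrm z <= `|complex.Re z| + `|complex.Im z|.
Proof.
rewrite {1}(complexE z); apply: le_trans (nrmD _ _) _.
by rewrite nrmM nrmi mul1r !nrmC.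
Qed.
Lemma nrm_sub (x y : C) : nrm x - nrm y <= nrm (x - y).
Proof. have := nrmD (x - y) y; rewrite subrK; lra. Qed.
End Nrm.
Section Cauchy.
Variable R : realType.
Local Notation C := (R[i]).
Lemma cauchyR (u : nat -> R) :
  (forall e : R, 0 < e -> exists N, forall k, `|u (N + k)%N - u N| <= e) ->
  exists a : R, u @ \oo --> a.
Proof.
move=> H.
have : [cvg (u @ \oo) in R].
  apply/cauchy_cvgP; apply: cauchy_exP => e e0.
  have [N HN] := H (e / 2) (divr_gt0 e0 (ltr0Sn _ 1)).
  exists (u N); exists N => // n /= Nn.
  rewrite -(subnKC Nn) -ball_normE /= distrC.
  apply: le_lt_trans (HN _) _; lra.
by move=> h; exists (lim (u @ \oo)); exact: h.
Qed.

Lemma ReB (x y : C) : complex.Re (x - y) = complex.Re x - complex.Re y.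
Proof. by case: x => a b; case: y => c d; simpc. Qed.
Lemma ImB (x y : C) : complex.Im (x - y) = complex.Im x - complex.Im y.
Proof. by case: x => a b; case: y => c d; simpc. Qed.

Lemma cvgC (u : nat -> C) :
  (forall e : R, 0 < e -> exists N, forall k, nrm (u (N + k)%N - u N) <= e) ->
  exists L : C, (u : nat -> C^o) @ \oo --> (L : C^o).
Proof.
move=> H.
have [a ha] : exists a : R, (fun n => complex.Re (u n)) @ \oo --> a.
  apply: cauchyR => e e0; have [N HN] := H e e0; exists N => k.
  by rewrite -ReB; apply: le_trans (Re_le _) (HN k).
have [b hb] : exists b : R, (fun n => complex.Im (u n)) @ \oo --> b.
  apply: cauchyR => e e0; have [N HN] := H e e0; exists N => k.
  by rewrite -ImB; apply: le_trans (Im_le _) (HN k).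
exists (a +i* b)%C.
apply/cvgrPdist_le => eps eps0.
have [Ieps Reps] : complex.Im eps = 0 /\ 0 < complex.Re eps.
  by move: eps0; rewrite ltcE /= => /andP[/eqP -> ->].
have epsE : eps = (complex.Re eps)%:C%C by case: eps Ieps {eps0 Reps} => ? ? /= ->.
set e := complex.Re eps in Reps epsE.
have e2 : 0 < e / 2 by apply: divr_gt0.
have Ha := (cvgrPdist_le _ _).1 ha _ e2.
have Hb := (cvgrPdist_le _ _).1 hb _ e2.
near=> t.
have Ha' : `|a - complex.Re (u t)| <= e / 2 by near: t; apply: Ha.
have Hb' : `|b - complex.Im (u t)| <= e / 2 by near: t; apply: Hb.
rewrite normE epsE lecR.
apply: le_trans (nrm_ReIm _) _.
rewrite ReB ImB /=.
lra.
Unshelve. all: by end_near.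
Qed.
End Cauchy.
Section Prod.
Variable R : realType.
Local Notation C := (R[i]).
Lemma nrm0 : nrm (0 : C) = 0.
Proof. by apply/eqP; rewrite nrm_eq0. Qed.

Lemma est (g : nat -> C) m k :
  \sum_(i < k) nrm (g (m + i)%N - 1) <= 1 / 2 ->
  nrm (\prod_(i < k) g (m + i)%N - 1) <= 2 * \sum_(i < k) nrm (g (m + i)%N - 1).
Proof.
elim: k => [|k IH]; first by rewrite !big_ord0 subrr nrm0 mulr0.
rewrite !big_ord_recr /=.
set s := \sum_(i < k) _; set y := nrm (g (m + k)%N - 1); set P := \prod_(i < k) _.
move=> hsy.
have y0 : 0 <= y by apply: nrm_ge0.
have s0 : 0 <= s by apply: sumr_ge0 => i _; apply: nrm_ge0.
have {}IH : nrm (P - 1) <= 2 * s by apply: IH; rewrite -/s; lra.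
have hg : nrm (g (m + k)%N) <= 1 + y.
  by have := nrmD 1 (g (m + k)%N - 1); rewrite addrC subrK nrm1.
have hP0 : 0 <= nrm (P - 1) by apply: nrm_ge0.
have hg0 : 0 <= nrm (g (m + k)%N) by apply: nrm_ge0.
have -> : P * g (m + k)%N - 1 = (P - 1) * g (m + k)%N + (g (m + k)%N - 1) by ring.
apply: le_trans (nrmD _ _) _; rewrite nrmM -/y.
set A := nrm (P - 1) in IH hP0 *; set G := nrm (g (m + k)%N) in hg hg0 *.
have h1 : 0 <= (2 * s - A) * G by apply: mulr_ge0; lra.
have h2 : 0 <= 2 * s * (1 + y - G) by apply: mulr_ge0; lra.
have h3 : 0 <= (1 - 2 * s) * y by apply: mulr_ge0; lra.
nra.
Qed.

Lemma prod_split (g : nat -> C) m k :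
  \prod_(i < m + k) g i = \prod_(i < m) g i * \prod_(i < k) g (m + i)%N.
Proof. by rewrite big_split_ord. Qed.

Lemma prod_cvg (g : nat -> C) (gnz : forall i, g i != 0)
  (H : forall e : R, 0 < e -> exists N, forall m k, (N <= m)%N ->
        \sum_(i < k) nrm (g (m + i)%N - 1) <= e) :
  exists L : C, L != 0 /\ (fun m => \prod_(i < m) g i : C^o) @ \oo --> (L : C^o).
Proof.
set P := fun m => \prod_(i < m) g i.
have [N0 HN0] := H (1 / 4) ltac:(lra).
set B := nrm (P N0).
have B0 : 0 < B by rewrite nrm_gt0 /P; apply/prodf_neq0 => i _; apply: gnz.
have bnd : forall k, B / 2 <= nrm (P (N0 + k)%N) <= 2 * B.
  move=> k; have hs := HN0 N0 k (leqnn _).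
  have := @est g N0 k ltac:(lra).
  rewrite /P prod_split nrmM -/(P N0) -/B.
  set T := \prod_(i < k) _ => hT.
  have h1 := nrm_sub T 1; have h2 := nrm_sub 1 T.
  rewrite nrm1 in h1 h2; rewrite nrmB in h2.
  apply/andP; split; nra.
have [L HL] : exists L : C, (P : nat -> C^o) @ \oo --> (L : C^o).
  apply: cvgC => e e0.
  set x := Num.min (e / (4 * B)) (1 / 4).
  have x0 : 0 < x by rewrite lt_min; apply/andP; split; [apply: divr_gt0 => //; lra | lra].
  have xe : 4 * B * x <= e.
    have : x <= e / (4 * B) by rewrite ge_min lexx.
    rewrite ler_pdivlMr; last lra.
    lra.
  have x4 : x <= 1 / 4 by rewrite ge_min lexx orbT.
  have [N1 HN1] := H x x0.
  exists (maxn N0 N1) => k.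
  set m := maxn N0 N1.
  rewrite /P prod_split -/(P m).
  set T := \prod_(i < k) _.
  have -> : P m * T - P m = P m * (T - 1) by ring.
  rewrite nrmM.
  have hs := HN1 m k (leq_maxr _ _).
  have hT := @est g m k ltac:(lra).
  have /andP[_ hPm] : B / 2 <= nrm (P m) <= 2 * B.
    by rewrite /m -(subnKC (leq_maxl N0 N1)); apply: bnd.
  have := nrm_ge0 (P m); have := nrm_ge0 (T - 1).
  have : 0 <= \sum_(i < k) nrm (g (m + i)%N - 1) by apply: sumr_ge0 => i _; apply: nrm_ge0.
  nra.
exists L; split => //.
apply/negP => /eqP L0; move: HL; rewrite L0 => HL.
have e0 : 0 < (B / 4)%:C%C :> C by rewrite ltcE /= eqxx /=; lra.
have [N2 _ HN2] := (cvgrPdist_lt _ _).1 HL _ e0.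
have := HN2 (N0 + N2)%N (leq_addl _ _).
rewrite /= sub0r normrN normE ltcR.
have /andP[h _] := bnd N2.
lra.
Qed.
End Prod.
Section Tail.
Variable R : realType.
Local Notation C := (R[i]).

Lemma natC (n : nat) : ((n%:R : R)%:C)%C = n%:R :> C.
Proof. by rewrite rmorph_nat. Qed.

Lemma inv_sq_step (T : R) : 1 <= T -> (T ^+ 2)^-1 <= 2 / T - 2 / (T + 1).
Proof.
move=> T1.
have T0 : T != 0 by rewrite gt_eqF //; lra.
have T10 : T + 1 != 0 by rewrite gt_eqF //; lra.
rewrite -subr_ge0.
have -> : 2 / T - 2 / (T + 1) - (T ^+ 2)^-1 = (T - 1) / (T ^+ 2 * (T + 1)).
  by field; rewrite T0 T10.
apply: divr_ge0; first lra.
apply: mulr_ge0; [exact: sqr_ge0 | lra].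
Qed.

Lemma sum_inv_sq (t k : nat) : (0 < t)%N ->
  \sum_(i < k) (((t + i)%N%:R : R) ^+ 2)^-1 <= 2 / t%:R - 2 / (t + k)%N%:R.
Proof.
move=> t0; elim: k => [|k IH]; first by rewrite big_ord0 addn0 subrr.
rewrite big_ord_recr /=.
have T1 : 1 <= ((t + k)%N%:R : R) by rewrite ler1n; lia.
have := inv_sq_step T1.
have -> : ((t + k.+1)%N%:R : R) = (t + k)%N%:R + 1 by rewrite addnS -natr1.
lra.
Qed.

Lemma tail (q r : int -> C) (hq : rapid_decay q) (hr : rapid_decay r)
  (J J' : nat -> int) (c : nat)
  (hJ : forall i, (i <= `|J i| + c)%N) (hJ' : forall i, (`|J i| <= `|J' i| + 1)%N) :
  forall e : R, 0 < e -> exists N, forall m k, (N <= m)%N ->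
    \sum_(i < k) nrm (q (J (m + i)%N) * r (J' (m + i)%N)) <= e.
Proof.
move=> e e0.
have [N1 H1] := hq 2%N (e / 2) ltac:(lra).
have [N2 H2] := hr 0%N 1 ltac:(lra).
exists (c + N1 + N2 + 1)%N => m k Hm.
set t := (m - c)%N.
have t1 : (1 <= t)%N by rewrite /t; lia.
have pt : forall i : 'I_k, nrm (q (J (m + i)%N) * r (J' (m + i)%N)) <=
    e / 2 * (((t + i)%N%:R : R) ^+ 2)^-1.
  move=> i.
  set j := J (m + i)%N; set j' := J' (m + i)%N.
  have hj : (t + i <= `|j|)%N by have := hJ (m + i)%N; rewrite /t /j; lia.
  have hj1 : (N1 <= `|j|)%N by rewrite /t in hj; lia.
  have hj2 : (N2 <= `|j'|)%N by have := hJ' (m + i)%N; rewrite -/j -/j'; lia.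
  have := H1 j hj1; rewrite -natC -rmorphXn normE -rmorphM lecR => hqj.
  have := H2 j' hj2; rewrite expr0 mul1r normE lecR => hrj.
  rewrite nrmM.
  have hT : 0 < ((t + i)%N%:R : R) ^+ 2 by apply: exprn_gt0; rewrite ltr0n; lia.
  rewrite mulrC -/(_ / _) ler_pdivlMr // .
  have hTj : ((t + i)%N%:R : R) ^+ 2 <= (`|j|%:R) ^+ 2.
    by rewrite ler_pXn2r ?nnegrE ?ler0n ?ler_nat.
  have h1 : nrm (q j) * ((t + i)%N%:R : R) ^+ 2 <= nrm (q j) * (`|j|%:R) ^+ 2.
    by apply: ler_wpM2l => //; apply: nrm_ge0.
  have h0 : 0 <= nrm (q j) * ((t + i)%N%:R : R) ^+ 2.
    by apply: mulr_ge0; [apply: nrm_ge0 | apply: ltW].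
  have h3 : 0 <= (1 - nrm (r j')) * (nrm (q j) * ((t + i)%N%:R : R) ^+ 2).
    by apply: mulr_ge0 => //; lra.
  rewrite -mulrA.
  lra.
apply: le_trans (ler_sum _ (fun i _ => pt i)) _.
rewrite -mulr_sumr.
have hs := sum_inv_sq k t1.
have h2 : 0 <= 2 / ((t + k)%N%:R : R) by apply: divr_ge0; rewrite ?ler0n //; lra.
have ht : 1 <= (t%:R : R) by rewrite ler1n.
have : 2 / (t%:R : R) <= 2 by rewrite ler_pdivrMr; lra.
have : 0 <= \sum_(i < k) (((t + i)%N%:R : R) ^+ 2)^-1.
  by apply: sumr_ge0 => i _; rewrite invr_ge0; apply: sqr_ge0.
nra.
Qed.
End Tail.
Section GL.
Variable R : realType.
Local Notation C := (R[i]).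

Lemma lim_uniq (u v : nat -> C) (a b : C) : (forall m, u m = v m) ->
  (u : nat -> C^o) @ \oo --> (a : C^o) -> (v : nat -> C^o) @ \oo --> (b : C^o) -> a = b.
Proof.
move=> uv ha hb; have e : u = v by apply: funext.
rewrite e in ha.
by rewrite -(cvg_lim (@norm_hausdorff _ (C^o)) ha) (cvg_lim (@norm_hausdorff _ (C^o)) hb).
Qed.

Lemma Zsplit (f : int -> C) m :
  \prod_(i < (2 * m).+1) f (i%:Z - m%:Z) =
  (\prod_(i < m.+1) f (0 - i%:Z)) * \prod_(i < m) f (1 + i%:Z).
Proof.
have -> : (2 * m).+1 = (m.+1 + m)%N by lia.
rewrite big_split_ord /=; congr (_ * _).
  rewrite (reindex_inj rev_ord_inj) /=; apply: eq_bigr => i _.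
  congr f; have := ltn_ord i; rewrite subSS; lia.
by apply: eq_bigr => i _; congr f; lia.
Qed.

Lemma GL (f : int -> C) (hf : forall j, f j != 0)
  (Ht : forall (J : nat -> int) (c : nat), (forall i, (i <= `|J i| + c)%N) ->
     forall e : R, 0 < e -> exists N, forall m k, (N <= m)%N ->
       \sum_(i < k) nrm (f (J (m + i)%N) - 1) <= e) :
  exists (Dl Rr : int -> C),
   (forall n, Dl n != 0) /\ (forall n, Rr n != 0) /\
   (forall n, lprod_to f n (Dl n)) /\
   (forall n, (fun m => \prod_(i < m) f (n + i%:Z) : C^o) @ \oo --> (Rr n : C^o)) /\
   (forall n, Dl n = Dl (n - 1) * f n) /\ (forall n, Rr n = f n * Rr (n + 1)) /\
   zprod_to f (Dl 0 * Rr 1).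
Proof.
have hl : forall n, exists L, L != 0 /\ lprod_to f n L.
  move=> n; apply: (@prod_cvg _ (fun i : nat => f (n - i%:Z))) => [i|]; first exact: hf.
  by apply: (Ht (fun i : nat => n - i%:Z) `|n|%N) => i; lia.
have hr : forall n, exists L, L != 0 /\
    (fun m => \prod_(i < m) f (n + i%:Z) : C^o) @ \oo --> (L : C^o).
  move=> n; apply: (@prod_cvg _ (fun i : nat => f (n + i%:Z))) => [i|]; first exact: hf.
  by apply: (Ht (fun i : nat => n + i%:Z) `|n|%N) => i; lia.
have [Dl hDl] := choice hl.
have [Rr hRr] := choice hr.
exists Dl, Rr.
have DlS : forall n, Dl n = Dl (n - 1) * f n.
  move=> n; rewrite mulrC.
  have h1 := (hDl n).2; rewrite /lprod_to -cvg_shiftS in h1.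
  have h2 : (fun m => f n * \prod_(i < m) f (n - 1 - i%:Z) : C^o) @ \oo --> (f n * Dl (n - 1) : C^o).
    by apply: cvgMl_tmp; exact: (hDl (n - 1)).2.
  apply: (lim_uniq _ h1 h2) => m /=.
  rewrite big_ord_recl /= subr0; congr (_ * _); apply: eq_bigr => i _.
  by congr f; rewrite /bump /=; lia.
have RrS : forall n, Rr n = f n * Rr (n + 1).
  move=> n.
  have h1 := (hRr n).2; rewrite -cvg_shiftS in h1.
  have h2 : (fun m => f n * \prod_(i < m) f (n + 1 + i%:Z) : C^o) @ \oo --> (f n * Rr (n + 1) : C^o).
    by apply: cvgMl_tmp; exact: (hRr (n + 1)).2.
  apply: (lim_uniq _ h1 h2) => m /=.
  rewrite big_ord_recl /= addr0; congr (_ * _); apply: eq_bigr => i _.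
  by congr f; rewrite /bump /=; lia.
do 6 (split; first by move=> *; solve [exact: (hDl _).1 | exact: (hRr _).1 | exact: (hDl _).2 | exact: (hRr _).2 | exact: DlS | exact: RrS]).
rewrite /zprod_to.
have -> : (fun m : nat => \prod_(i < (2 * m).+1) f (i%:Z - m%:Z) : C^o) =
    (fun m => (\prod_(i < m.+1) f (0 - i%:Z)) * \prod_(i < m) f (1 + i%:Z)).
  by apply: funext => m; rewrite Zsplit.
apply: cvgM; last exact: (hRr 1).2.
by rewrite (cvg_shiftS (fun m => \prod_(i < m) f (0 - i%:Z) : C^o)); exact: (hDl 0).2.
Qed.
End GL.

Unset Implicit Arguments.

Theorem proposition3p1 (R : realType) (q r : int -> R[i])
  (hq : rapid_decay q) (hr : rapid_decay r)
  (hqr : forall n : int, 1 - q n * r n != 0)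
  (hqr1 : forall n : int, 1 + q n * r (n + 1) != 0) :
  exists (D E : int -> R[i]) (Dinf Einf : R[i]),
    (forall n : int, lprod_to (fun j => 1 - q j * r j) n (D n)) /\
    (forall n : int, lprod_to (fun j => 1 + q j * r (j + 1)) n (E n)) /\
    zprod_to (fun j => 1 - q j * r j) Dinf /\
    zprod_to (fun j => 1 + q j * r (j + 1)) Einf /\
    let u := useq q r D E in
    let v := vseq q r D E in
    let p := pseq q r D E in
    let s := sseq q r D E in
    (forall n : int,
        1 - u n * v n = 1 / ((1 - q n * r n) * (1 + q n * r (n + 1)))) /\
    (forall n : int,
        1 - p n * s n = 1 / ((1 - q (n + 1) * r (n + 1)) * (1 + q n * r (n + 1)))) /\
    (forall n : int, lprod_to (fun j => 1 - u j * v j) n (1 / (D n * E n))) /\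
    zprod_to (fun j => 1 - u j * v j) (1 / (Dinf * Einf)) /\
    (forall n : int, lprod_to (fun j => 1 - p j * s j) n (1 / (D (n + 1) * E n))) /\
    zprod_to (fun j => 1 - p j * s j) (1 / (Dinf * Einf)).
Proof.
set fa := fun j => 1 - q j * r j.
set fb := fun j => 1 + q j * r (j + 1).
set fa' := fun j => 1 - q (j + 1) * r (j + 1).
have Hta : forall (J : nat -> int) (c : nat), (forall i, (i <= `|J i| + c)%N) ->
     forall e : R, 0 < e -> exists N, forall m k, (N <= m)%N ->
       \sum_(i < k) nrm (fa (J (m + i)%N) - 1) <= e.
  move=> J c hJ e e0.
  have [N HN] := @tail R q r hq hr J J c hJ (fun i => ltac:(lia)) e e0.
  exists N => m k Hm; apply: le_trans (HN m k Hm); rewrite le_eqVlt; apply/orP; left.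
  by apply/eqP/eq_bigr => i _; rewrite /fa (_ : forall x : R[i], 1 - x - 1 = - x) ?nrmN // => x; ring.
have Htb : forall (J : nat -> int) (c : nat), (forall i, (i <= `|J i| + c)%N) ->
     forall e : R, 0 < e -> exists N, forall m k, (N <= m)%N ->
       \sum_(i < k) nrm (fb (J (m + i)%N) - 1) <= e.
  move=> J c hJ e e0.
  have [N HN] := @tail R q r hq hr J (fun i => J i + 1) c hJ (fun i => ltac:(lia)) e e0.
  exists N => m k Hm; apply: le_trans (HN m k Hm); rewrite le_eqVlt; apply/orP; left.
  by apply/eqP/eq_bigr => i _; rewrite /fb (_ : forall x : R[i], 1 + x - 1 = x) // => x; ring.
have Hta' : forall (J : nat -> int) (c : nat), (forall i, (i <= `|J i| + c)%N) ->
     forall e : R, 0 < e -> exists N, forall m k, (N <= m)%N ->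
       \sum_(i < k) nrm (fa' (J (m + i)%N) - 1) <= e.
  move=> J c hJ e e0.
  have hJ1 : forall i, (i <= `|(J i + 1)%R| + c.+1)%N by move=> i; have := hJ i; lia.
  have [N HN] := @tail R q r hq hr (fun i => J i + 1) (fun i => J i + 1) c.+1 hJ1 (fun i => ltac:(lia)) e e0.
  exists N => m k Hm; apply: le_trans (HN m k Hm); rewrite le_eqVlt; apply/orP; left.
  by apply/eqP/eq_bigr => i _; rewrite /fa' (_ : forall x : R[i], 1 - x - 1 = - x) ?nrmN // => x; ring.
have [Da [Ra [Dnz [Rnz [hDa [hRa [DaS [RaS hZa]]]]]]]] := @GL R fa hqr Hta.
have [Db [Rb [Dbnz [Rbnz [hDb [hRb [DbS [RbS hZb]]]]]]]] := @GL R fb hqr1 Htb.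
have [Da' [Ra' [_ [_ [hDa' [hRa' [_ [_ hZa']]]]]]]] := @GL R fa' (fun j => hqr (j + 1)) Hta'.
exists Da, Db, (Da 0 * Ra 1), (Db 0 * Rb 1).
do 4 (split; first by []).
move=> u v p s.
have Id1 : forall n, 1 - u n * v n = 1 / ((1 - q n * r n) * (1 + q n * r (n + 1))).
  move=> n; rewrite /u /v /useq /vseq (DaS n) (DbS n) /fa /fb.
  have := Dnz (n - 1); have := Dbnz (n - 1); have := hqr n; have := hqr1 n.
  move=> h1 h2 h3 h4; field.
  by rewrite h1 h2 h3 h4.
have Id2 : forall n, 1 - p n * s n = 1 / ((1 - q (n + 1) * r (n + 1)) * (1 + q n * r (n + 1))).
  move=> n; rewrite /p /s /pseq /sseq (DaS (n + 1)) (DbS n) addrK /fa /fb.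
  have := Dnz n; have := Dbnz (n - 1); have := hqr (n + 1); have := hqr1 n.
  move=> h1 h2 h3 h4; field.
  by rewrite h1 h2 h3 h4.
split; first exact: Id1.
split; first exact: Id2.
split.
  move=> n; rewrite /lprod_to div1r.
  have -> : (fun m : nat => \prod_(i < m) (fun j => 1 - u j * v j) (n - i%:Z) : R[i]^o) =
      (fun m => ((\prod_(i < m) fa (n - i%:Z)) * \prod_(i < m) fb (n - i%:Z))^-1).
    apply: funext => m; rewrite -big_split -prodfV /=; apply: eq_bigr => i _.
    by rewrite Id1 div1r.
  apply: (cvgV (f := fun m => (\prod_(i < m) fa (n - i%:Z)) * \prod_(i < m) fb (n - i%:Z))).
    by rewrite mulf_neq0.
  by apply: cvgM; [exact: hDa | exact: hDb].
split.
  rewrite /zprod_to div1r.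
  have -> : (fun m : nat => \prod_(i < (2 * m).+1) (fun j => 1 - u j * v j) (i%:Z - m%:Z) : R[i]^o) =
      (fun m => ((\prod_(i < (2 * m).+1) fa (i%:Z - m%:Z)) * \prod_(i < (2 * m).+1) fb (i%:Z - m%:Z))^-1).
    apply: funext => m; rewrite -big_split -prodfV /=; apply: eq_bigr => i _.
    by rewrite Id1 div1r.
  apply: (cvgV (f := fun m => (\prod_(i < (2 * m).+1) fa (i%:Z - m%:Z)) * \prod_(i < (2 * m).+1) fb (i%:Z - m%:Z))).
    by rewrite !mulf_neq0.
  by apply: cvgM; [exact: hZa | exact: hZb].
split.
  move=> n; rewrite /lprod_to div1r.
  have -> : (fun m : nat => \prod_(i < m) (fun j => 1 - p j * s j) (n - i%:Z) : R[i]^o) =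
      (fun m => ((\prod_(i < m) fa (n + 1 - i%:Z)) * \prod_(i < m) fb (n - i%:Z))^-1).
    apply: funext => m; rewrite -big_split -prodfV /=; apply: eq_bigr => i _.
    rewrite (_ : n + 1 - i%:Z = n - i%:Z + 1); last by lia.
    by rewrite Id2 div1r.
  apply: (cvgV (f := fun m => (\prod_(i < m) fa (n + 1 - i%:Z)) * \prod_(i < m) fb (n - i%:Z))).
    by rewrite mulf_neq0.
  by apply: cvgM; [exact: hDa | exact: hDb].
rewrite /zprod_to div1r.
have -> : (fun m : nat => \prod_(i < (2 * m).+1) (fun j => 1 - p j * s j) (i%:Z - m%:Z) : R[i]^o) =
    (fun m => ((\prod_(i < (2 * m).+1) fa' (i%:Z - m%:Z)) * \prod_(i < (2 * m).+1) fb (i%:Z - m%:Z))^-1).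
  apply: funext => m; rewrite -big_split -prodfV /=; apply: eq_bigr => i _.
  by rewrite Id2 div1r.
have E1 : Da' 0 = Da 1.
  apply: (lim_uniq _ (hDa' 0) (hDa 1)) => m; apply: eq_bigr => i _.
  by rewrite /fa' (_ : 0 - i%:Z + 1 = 1 - i%:Z) //; lia.
have E2 : Ra' 1 = Ra 2.
  apply: (lim_uniq _ (hRa' 1) (hRa 2)) => m; apply: eq_bigr => i _.
  by rewrite /fa' (_ : 1 + i%:Z + 1 = 2 + i%:Z) //; lia.
have E3 : Da' 0 * Ra' 1 = Da 0 * Ra 1.
  rewrite E1 E2 (DaS 1) (RaS 1) subrr -mulrA.
  by rewrite (_ : (1 + 1 : int) = 2).
rewrite -E3.
apply: (cvgV (f := fun m => (\prod_(i < (2 * m).+1) fa' (i%:Z - m%:Z)) * \prod_(i < (2 * m).+1) fb (i%:Z - m%:Z))).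
  by rewrite E3 !mulf_neq0.
by apply: cvgM; [exact: hZa' | exact: hZb].
Qed.
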